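(* Let $k\ge3$ and let $p_1<\dots<p_k$ be odd primes. Then $$C_{p_1\cdots p_k}\le p_1\cdots p_{k-2}\cdot A_{p_1\cdots p_{k-1}}\cdot C_{p_1\cdots p_{k-1}},$$ and consequently $\epsilon_k^{inv}\le\epsilon_2\epsilon_3\cdots\epsilon_{k-1}$.
   Context: $\Phi_n$ is the $n$-th cyclotomic polynomial, $A_n$ the maximum absolute value of its coefficients; $\Psi_n(x)=1/\Phi_n(x)=\sum_{m\ge0}c_n(m)x^m$ as a formal power series and $C_n=\max_m|c_n(m)|$. For odd primes $p_1<\dots<p_k$, $M_k=\prod_{i=1}^{k-2}p_i^{2^{k-i-1}-1}$; $\epsilon_k$ (resp. $\epsilon_k^{inv}$) is the smallest positive real with $A_{p_1\cdots p_k}\le\epsilon_kM_k$ (resp. $C_{p_1\cdots p_k}\le\epsilon_k^{inv}M_k$) for all odd primes $p_1<\dots<p_k$. *)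

(* Defs.v *)
From HB Require Import structures.
From mathcomp Require Import all_boot all_order all_algebra all_field.
Set Implicit Arguments. Unset Strict Implicit. Unset Printing Implicit Defensive.
Import Order.TTheory GRing.Theory Num.Theory.
Local Open Scope ring_scope.

Definition Acoef (n : nat) : nat :=
  \max_(i < size 'Phi_n) absz (nth 0%R 'Phi_n i).

(* First m+1 coefficients of the formal power series inverse 1/p
   (p`_0 assumed a unit; for cyclotomic polynomials p`_0 = +-1). *)
Fixpoint inv_series_seq (p : {poly int}) (m : nat) : seq int :=
  match m with
  | 0 => [:: (p`_0)^-1]
  | m'.+1 =>
      let s := inv_series_seq p m' in
      rcons s (- (p`_0)^-1 * \sum_(1 <= i < m'.+2) p`_i * s`_(m'.+1 - i))
  end.

Definition inv_cyc_coef (n m : nat) : int := (inv_series_seq 'Phi_n m)`_m.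

Definition is_Cmax (n C : nat) : Prop :=
  (forall m, (absz (inv_cyc_coef n m) <= C)%N) /\ exists m, absz (inv_cyc_coef n m) = C.

Definition odd_prime_chain (k : nat) (s : seq nat) : bool :=
  [&& size s == k, all prime s, all odd s & sorted ltn s].

(* M_k = prod_{i=1}^{k-2} p_i^(2^(k-i-1) - 1), here with 0-based index j = i-1 *)
Definition Mk (k : nat) (s : seq nat) : nat :=
  (\prod_(j < k.-2) (nth 0 s j) ^ (2 ^ (k - j - 2) - 1))%N.

Definition eps_admissible (R : realFieldType) (k : nat) (e : R) : Prop :=
  forall s, odd_prime_chain k s -> (Acoef (\prod_(p <- s) p))%:R <= e * (Mk k s)%:R.

Definition eps_inv_admissible (R : realFieldType) (k : nat) (e : R) : Prop :=
  forall s C, odd_prime_chain k s -> is_Cmax (\prod_(p <- s) p) C ->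
    C%:R <= e * (Mk k s)%:R.

(* Main.v *)
Require Import Defs.
From HB Require Import structures.
From mathcomp Require Import all_boot all_order all_algebra all_field.
From Stdlib Require Import Lia.
Import Order.TTheory GRing.Theory Num.Theory.
Set Implicit Arguments. Unset Strict Implicit. Unset Printing Implicit Defensive.
Module P1.
Local Open Scope ring_scope.

Definition cs (P : {poly int}) (m : nat) : int := (inv_series_seq P m)`_m.

Lemma iss_size (P : {poly int}) m : size (inv_series_seq P m) = m.+1.
Proof. by elim: m => [|m IH] //=; rewrite size_rcons IH. Qed.

Lemma iss_nth (P : {poly int}) m i : (i <= m)%N -> (inv_series_seq P m)`_i = cs P i.
Proof.
elim: m => [|m IH]; first by rewrite leqn0 => /eqP ->.
rewrite leq_eqVlt => /orP[/eqP -> // | him].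
by rewrite /= nth_rcons iss_size him IH.
Qed.

Lemma iss_conv (P : {poly int}) m : P`_0 \is a GRing.unit ->
  \sum_(i < m.+1) P`_i * cs P (m - i) = (m == 0%N)%:R.
Proof.
move=> uP; case: m => [|m].
  by rewrite big_ord1 /cs /= mulrV.
rewrite big_ord_recl /= subn0.
have -> : cs P m.+1 = - (P`_0)^-1 * \sum_(1 <= i < m.+2) P`_i * cs P (m.+1 - i).
  rewrite /cs /= nth_rcons iss_size ltnn eqxx; congr (_ * _).
  rewrite !big_nat; apply: eq_bigr => i /andP[i1 _].
  by rewrite iss_nth // leq_subLR -add1n leq_add2r.
rewrite big_add1 /= big_mkord mulrA mulrN mulrV // mulN1r.
under [X in _ + X]eq_bigr => i _ do rewrite /bump /= add1n subSS.
by rewrite addNr.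
Qed.

Lemma iss_uniq (P : {poly int}) (Q : {poly int}) N : P`_0 \is a GRing.unit ->
  (forall i, (i < N)%N -> (P * Q)`_i = (i == 0%N)%:R) ->
  forall i, (i < N)%N -> Q`_i = cs P i.
Proof.
move=> uP HQ i; elim/ltn_ind: i => i IH iN.
have := HQ i iN; rewrite -(iss_conv i uP) coefM.
rewrite !big_ord_recl /= !subn0.
have -> : \sum_(i0 < i) P`_(bump 0 i0) * Q`_(i - bump 0 i0) =
          \sum_(i0 < i) P`_(bump 0 i0) * cs P (i - bump 0 i0).
  apply: eq_bigr => j _; rewrite IH //.
  - by rewrite /bump /= add1n; case: i {IH iN HQ} j => [[]|i j] //; rewrite subSS ltnS leq_subr.
  - by apply: leq_ltn_trans iN; rewrite leq_subr.
by move/addIr; apply: mulrI.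
Qed.

Lemma iss_trunc (P : {poly int}) N : P`_0 \is a GRing.unit ->
  forall i, (i < N)%N -> (P * \poly_(j < N) cs P j)`_i = (i == 0%N)%:R.
Proof.
move=> uP i iN; rewrite coefM -(iss_conv i uP); apply: eq_bigr => j _.
by rewrite coef_poly (leq_ltn_trans (leq_subr _ _) iN).
Qed.

End P1.
Import P1.

Module P2.
Local Open Scope ring_scope.

Lemma Phi0_unit n : (0 < n)%N -> 'Phi_n`_0 \is a GRing.unit.
Proof.
move=> n0; have := prod_Cyclotomic n0.
rewrite (big_rem n) ?divisors_id // => /(congr1 (horner^~ 0)).
rewrite hornerM horner_prod hornerD hornerN hornerXn hornerC expr0n.
rewrite gtn_eqF // sub0r horner_coef0 => H.
by have := @unitrN1 int; rewrite -H unitrM => /andP[].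
Qed.

Lemma divisors_mulp n p : (0 < n)%N -> prime p -> coprime p n ->
  perm_eq (divisors (n * p)) (divisors n ++ [seq (d * p)%N | d <- divisors n]).
Proof.
move=> n0 pp cpn; have p0 := prime_gt0 pp.
apply: uniq_perm; first exact: divisors_uniq.
  rewrite cat_uniq divisors_uniq /=; apply/andP; split.
    apply/hasPn => x /mapP[d dn ->]; rewrite -dvdn_divisors //.
    apply/negP => /(dvdn_trans (dvdn_mull d (dvdnn p))).
    by rewrite -(negbK (p %| n)%N) -prime_coprime // cpn.
  rewrite map_inj_uniq ?divisors_uniq // => a b /eqP.
  by rewrite eqn_pmul2r // => /eqP.
move=> x; rewrite mem_cat -!dvdn_divisors ?muln_gt0 ?n0 ?p0 //.
apply/idP/orP.
  case pdx: (p %| x)%N.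
    move: pdx => /dvdnP[d ->]; rewrite dvdn_pmul2r // => dn.
    by right; apply/mapP; exists d; rewrite // -dvdn_divisors.
  move=> xnp; left; rewrite -(Gauss_dvdl _ (p := p)) //.
  by rewrite coprime_sym prime_coprime // pdx.
case=> [xn | /mapP[d dn ->]]; first by rewrite dvdn_mulr.
by rewrite dvdn_pmul2r // dvdn_divisors.
Qed.

Lemma comp_prod (s : seq nat) (F : nat -> {poly int}) q :
  (\prod_(d <- s) F d) \Po q = \prod_(d <- s) (F d \Po q).
Proof.
elim: s => [|a s IH]; first by rewrite !big_nil comp_polyC.
by rewrite !big_cons comp_polyM IH.
Qed.

Lemma Phi_comp n p : (0 < n)%N -> prime p -> coprime p n ->
  'Phi_(n * p) * 'Phi_n = 'Phi_n \Po 'X^p.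
Proof.
move=> + pp; have p0 := prime_gt0 pp.
elim/ltn_ind: n => n IH n0 cpn.
have E : \prod_(d <- divisors n) ('Phi_(d * p) * 'Phi_d) =
         \prod_(d <- divisors n) ('Phi_d \Po 'X^p).
  rewrite -comp_prod prod_Cyclotomic // comp_polyB comp_Xn_poly comp_polyC.
  rewrite -exprM mulnC -prod_Cyclotomic ?muln_gt0 ?n0 ?p0 //.
  rewrite (perm_big _ (divisors_mulp n0 pp cpn)) big_cat big_map /=.
  by rewrite big_split /= mulrC.
move: E; rewrite (big_rem n) ?divisors_id // [X in _ = X](big_rem n) ?divisors_id //=.
have -> : \prod_(y <- rem n (divisors n)) ('Phi_(y * p) * 'Phi_y) =
          \prod_(y <- rem n (divisors n)) ('Phi_y \Po 'X^p).
  apply: eq_big_seq => d; rewrite mem_rem_uniq ?divisors_uniq // inE.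
  case/andP=> dn; rewrite -dvdn_divisors // => ddn.
  have d0 : (0 < d)%N by apply: dvdn_gt0 ddn.
  apply: IH => //; first by rewrite ltn_neqAle dn dvdn_leq.
  exact: coprime_dvdr ddn cpn.
apply: mulIf; rewrite prodf_seq_neq0; apply/allP => d _ /=.
rewrite comp_poly_eq0 ?size_polyXn ?ltnS ?prime_gt0 //.
by rewrite monic_neq0 // Cyclotomic_monic.
Qed.

End P2.
Import P2.

Module P3.

Ltac slia :=
  repeat (match goal with | H : is_true (leq _ _) |- _ => move/ssrnat.leP: H => H end);
  try apply/ssrnat.leP;
  repeat (match goal with | H : (_ <= _)%coq_nat |- _ => revert H end);
  rewrite -?minusE -?plusE -?multE; intros; lia.



Lemma count_box L a B : (\sum_(i < L) ((a <= i) && (i < a + B)%N : nat) <= B)%N.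
Proof.
suff : (\sum_(i < L) ((a <= i) && (i < a + B)%N : nat) <= (L - a) - (L - (a + B)))%N.
  move=> H; apply: leq_trans H _; slia.
elim: L => [|L IH]; first by rewrite big_ord0.
rewrite big_ord_recr /=.
case H: ((a <= L) && (L < a + B))%N.
  move/andP: H => [H1 H2] /=; move: IH; set s := \sum_(i < L) _ => IH; slia.
rewrite addn0; move: IH; set s := \sum_(i < L) _ => IH; slia.
Qed.

Local Open Scope ring_scope.

Lemma absz_add (x y : int) : (absz (x + y)%R <= absz x + absz y)%N.
Proof. by rewrite -lez_nat PoszD !abszE ler_normD. Qed.

Lemma absz_sum_le S (F : nat -> int) (G : nat -> nat) :
  (forall i, absz (F i) <= G i)%N ->
  (absz (\sum_(i < S) F i)%R <= \sum_(i < S) G i)%N.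
Proof.
move=> h; elim: S => [|S IH]; first by rewrite !big_ord0.
rewrite !big_ord_recr /=; apply: leq_trans (absz_add _ _) _.
exact: leq_add.
Qed.

Lemma step n p B Cb : (0 < n)%N -> prime p -> coprime p n ->
  ((totient n).+1 <= B * p)%N ->
  (forall j, absz (inv_cyc_coef n j) <= Cb)%N ->
  forall m, (absz (inv_cyc_coef (n * p) m) <= B * Acoef n * Cb)%N.
Proof.
move=> n0 pp cpn hB hC m; have p0 := prime_gt0 pp.
set Phi := 'Phi_n.
set T := \poly_(j < m.+1) cs Phi j.
set Q := Phi * (T \Po 'X^p).
have np0 : (0 < n * p)%N by rewrite muln_gt0 n0 p0.
have HQ : forall i, (i < m.+1)%N -> ('Phi_(n * p) * Q)`_i = (i == 0%N)%:R.
  move=> i im; rewrite /Q mulrA Phi_comp // -comp_polyM coef_comp_poly_Xn //.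
  case: ifP => [/dvdnP[k ik] | ndv].
    subst i; rewrite mulnK // iss_trunc ?Phi0_unit //; last first.
      by apply: leq_ltn_trans im; rewrite leq_pmulr.
    by rewrite muln_eq0 (gtn_eqF p0) orbF.
  by case: i im ndv => // _; rewrite dvdn0.
rewrite /inv_cyc_coef -/(cs _ m) -(iss_uniq (Phi0_unit np0) HQ (ltnSn m)).
rewrite /Q comp_polyE mulr_sumr coef_sum.
pose ind (i : nat) := ((p * i <= m) && (m - p * i < size Phi))%N.
apply: (@leq_trans (\sum_(i < size T) Cb * (Acoef n * ind i))%N).
  rewrite (eq_bigr (fun i : 'I_(size T) => T`_i * ('Phi_n * 'X^(p * i))`_m)); last first.
    by move=> i _; rewrite -scalerAr coefZ -exprM.
  apply: (@absz_sum_le (size T) (fun i => T`_i * ('Phi_n * 'X^(p * i))`_m) (fun i => Cb * (Acoef n * ind i))%N) => i.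
  rewrite coefMXn abszM; apply: leq_mul.
    by rewrite coef_poly; case: ifP => _; [exact: hC | ].
  rewrite /ind; case: ifP => [_ | /negbT]; first by [].
  rewrite -ssrnat.leqNgt => ->; case hs: (m - p * i < size Phi)%N; rewrite /= ?muln1.
    by move: (@leq_bigmax _ (fun i : 'I_(size 'Phi_n) => absz (nth 0 'Phi_n i)) (Ordinal hs)).
  by rewrite nth_default // ssrnat.leqNgt hs.
rewrite -big_distrr -big_distrr /= [X in (_ <= X)%N]mulnC [X in (_ <= _ * X)%N]mulnC.
apply: leq_mul => //; apply: leq_mul => //.
apply: leq_trans (count_box (size T) (m %/ p + 1 - B) B).
apply: leq_sum => i _; rewrite /ind.
case H: ((p * i <= m) && (m - p * i < size Phi))%N => //=.
move/andP: H => [H1 H2].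
have h1 : (i <= m %/ p)%N by rewrite leq_divRL // mulnC.
have h2 : (m %/ p < i + B)%N.
  rewrite ltn_divLR //; move: H2; rewrite /Phi size_Cyclotomic => H2.
  rewrite mulnDl [(i * p)%N]mulnC; move: hB H1 H2.
  move: (p * i)%N (totient n) => x y ? ? ?; slia.
move: h1 h2; set q := (m %/ p)%N => h1 h2.
case H: ((q + 1 - B <= i) && (i < q + 1 - B + B))%N => //.
move/negbT: H; rewrite negb_and => /orP[] /negP []; slia.
Qed.

End P3.
Import P3.

Module P4.
Local Open Scope ring_scope.

Lemma Phi1 : 'Phi_1 = 'X - 1.
Proof. by have := prod_Cyclotomic (ltn0Sn 0); rewrite big_seq1 expr1. Qed.

Lemma c1_bound m : (absz (inv_cyc_coef 1 m) <= 1)%N.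
Proof.
pose Q : {poly int} := - \poly_(j < m.+1) 1.
have HQ : forall i, (i < m.+1)%N -> ('Phi_1 * Q)`_i = (i == 0%N)%:R.
  move=> i im; rewrite Phi1 /Q mulrN mulrBl mul1r opprB coefB coefXM !coef_poly.
  case: i im => [|i] im; first by rewrite im subr0.
  by rewrite im /= (ltnW im) subrr.
rewrite /inv_cyc_coef -/(cs _ m) -(iss_uniq (Phi0_unit (ltn0Sn 0)) HQ (ltnSn m)).
by rewrite /Q coefN coef_poly ltnSn.
Qed.

Lemma A1 : (Acoef 1 <= 1)%N.
Proof.
apply/bigmax_leqP => i _; move: (nat_of_ord i) => j.
by rewrite Phi1 coefB coefX coef1; case: j => [|[|j]].
Qed.

Lemma Aprime p : prime p -> (Acoef p <= 1)%N.
Proof.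
move=> pp; have p0 := prime_gt0 pp.
have E := Phi_comp (ltn0Sn 0) pp (coprimen1 p).
rewrite mul1n Phi1 comp_polyB comp_polyX comp_polyC in E.
have key : forall i, (i < p)%N -> 'Phi_p`_i = 1.
  elim=> [|i IH] ip.
    have := congr1 (fun q : {poly int} => q`_0) E; rewrite /= mulrBr mulr1 coefB coefMX.
    by rewrite coefB coefXn coef1 /= eq_sym (gtn_eqF p0) /= ?mulr0n !sub0r => /oppr_inj.
  have := congr1 (fun q : {poly int} => q`_i.+1) E; rewrite /= mulrBr mulr1 coefB coefMX.
  rewrite coefB coefXn coef1 /= (ltn_eqF ip) subr0 IH ?(ltnW ip) //.
  by move/eqP; rewrite subr_eq0 => /eqP <-.
apply/bigmax_leqP => i _; have := ltn_ord i; move: (nat_of_ord i) => j.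
by rewrite size_Cyclotomic totient_prime // prednK // => /key ->.
Qed.

End P4.
Import P4.

Module P5.

Lemma totient_le n : (totient n <= n)%N.
Proof.
rewrite totient_count_coprime.
apply: (@leq_trans (\sum_(0 <= d < n) 1)%N); first by apply: leq_sum => d _; exact: leq_b1.
by rewrite sum_nat_const_nat subn0 muln1.
Qed.

Lemma prod_take (s : seq nat) j : (j <= size s)%N ->
  (\prod_(p <- take j s) p = \prod_(i < j) nth 0 s i)%N.
Proof.
elim: j => [|j IH] hj; first by rewrite take0 big_nil big_ord0.
by rewrite (take_nth 0) // -cats1 big_cat big_seq1 IH ?(ltnW hj) // big_ord_recr.
Qed.

Section Chain.
Variable s : seq nat.
Hypothesis hp : all prime s.
Hypothesis hsort : sorted ltn s.

Definition nn j := (\prod_(i < j) nth 0 s i)%N.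

Lemma nnS j : nn j.+1 = (nn j * nth 0 s j)%N.
Proof. by rewrite /nn big_ord_recr. Qed.

Lemma sprime i : (i < size s)%N -> prime (nth 0 s i).
Proof. by move: i; apply/all_nthP. Qed.

Lemma slt i j : (i < j)%N -> (j < size s)%N -> (nth 0 s i < nth 0 s j)%N.
Proof.
move=> ij js; apply: (sorted_ltn_nth ltn_trans 0 hsort) => //.
by rewrite inE (ltn_trans ij js).
Qed.

Lemma nn_gt0 j : (j <= size s)%N -> (0 < nn j)%N.
Proof.
elim: j => [|j IH] hj; first by rewrite /nn big_ord0.
by rewrite nnS muln_gt0 IH ?(ltnW hj) // prime_gt0 // sprime.
Qed.

Lemma cop j : (j < size s)%N -> coprime (nth 0 s j) (nn j).
Proof.
move=> js; suff : forall i, (i <= j)%N -> coprime (nth 0 s j) (nn i) by apply.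
elim=> [|i IH] ij; first by rewrite /nn big_ord0 coprimen1.
rewrite nnS coprimeMr IH ?(ltnW ij) //= prime_coprime ?sprime //.
rewrite dvdn_prime2 ?sprime ?(ltn_trans ij js) //.
by rewrite eq_sym (ltn_eqF (slt ij js)).
Qed.

Lemma tot_bound j : (1 <= j)%N -> (j < size s)%N ->
  ((totient (nn j)).+1 <= nn j.-1 * nth 0 s j)%N.
Proof.
case: j => // j _ js; rewrite nnS /=.
have l1 := slt (ltnSn j) js.
have l2 : (nn j * (nth 0 s j).+1 <= nn j * nth 0 s j.+1)%N by rewrite leq_mul2l l1 orbT.
have l3 := nn_gt0 (ltnW (ltnW js)).
have l4 := totient_le (nn j * nth 0 s j).
apply: leq_trans _ l2; rewrite mulnS addnC -addn1; exact: leq_add l4 l3.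
Qed.

Lemma chain_step j Cb : (1 <= j)%N -> (j < size s)%N ->
  (forall m, absz (inv_cyc_coef (nn j) m) <= Cb)%N ->
  forall m, (absz (inv_cyc_coef (nn j.+1) m) <= nn j.-1 * Acoef (nn j) * Cb)%N.
Proof.
move=> j1 js h m; rewrite nnS; apply: step => //.
- exact: nn_gt0 (ltnW js).
- exact: sprime.
- exact: cop.
- exact: tot_bound.
Qed.

Lemma chain_base m : (1 < size s)%N -> (absz (inv_cyc_coef (nn 2) m) <= 1)%N.
Proof.
move=> s1.
have h1 : forall m, (absz (inv_cyc_coef (nn 1) m) <= 1)%N.
  move=> m'; have -> : nn 1 = (1 * nth 0 s 0)%N by rewrite /nn big_ord1 mul1n.
  apply: leq_trans (step (B := 1) (Cb := 1) _ _ _ _ c1_bound m') _ => //.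
  - exact: sprime (ltnW s1).
  - exact: coprimen1.
  - by rewrite mul1n; change (totient 1) with 1%N; rewrite prime_gt1 // sprime // (ltnW s1).
  - by rewrite mul1n muln1 A1.
apply: leq_trans (chain_step _ _ h1 m) _ => //.
rewrite /nn big_ord0 big_ord1 mul1n muln1 Aprime //.
exact: sprime (ltnW s1).
Qed.

End Chain.

End P5.
Import P5.

Module P6.

Lemma all_take_ (a : pred nat) n (s : seq nat) : all a s -> all a (take n s).
Proof. by move/allP=> h; apply/allP => x /mem_take; apply: h. Qed.

Lemma chain_take k s j : odd_prime_chain k s -> (j <= k)%N -> odd_prime_chain j (take j s).
Proof.
case/and4P=> /eqP sz hp ho hs jk.
by rewrite /odd_prime_chain size_takel ?sz // eqxx !all_take_ // take_sorted.
Qed.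

Lemma Mk_take j s : Mk j (take j s) = Mk j s.
Proof.
rewrite /Mk; apply: eq_bigr => i _; rewrite nth_take //.
by apply: leq_trans (ltn_ord i) (leq_trans (leq_pred _) (leq_pred _)).
Qed.

Lemma Mk_step d s : Mk d.+3 s = (nn s d.+1 * Mk d.+2 s * Mk d.+2 s)%N.
Proof.
rewrite /Mk /= big_ord_recr /= nnS /nn.
have -> : (d.+3 - d - 2 = 1)%N by rewrite -addn3 -addnBAC // subnn.
rewrite expn1.
have -> : (\prod_(i < d) nth 0 s i ^ (2 ^ (d.+3 - i - 2) - 1) =
  \prod_(i < d) nth 0 s i * (\prod_(i < d) nth 0 s i ^ (2 ^ (d.+2 - i - 2) - 1)) *
  (\prod_(i < d) nth 0 s i ^ (2 ^ (d.+2 - i - 2) - 1)))%N.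
  rewrite -!big_split /=; apply: eq_bigr => i _.
  rewrite -{2}(expn1 (nth 0 s i)) -!expnD; congr (_ ^ _).
  have : (0 < 2 ^ (d.+2 - i - 2))%N by rewrite expn_gt0.
  have -> : (d.+3 - i - 2 = (d.+2 - i - 2).+1)%N.
    have := ltn_ord i; move: (nat_of_ord i) => x hx; apply/eqP; rewrite -eqSS.
    apply/eqP; move/ssrnat.leP: hx => hx; rewrite -!minusE; lia.
  rewrite expnS; move: (2 ^ _)%N => x /ssrnat.leP hx.
  apply/eqP; rewrite -!minusE -!plusE -!multE; apply/eqP; lia.
move: (\prod_(i < d) _)%N (\prod_(i < d) _)%N (nth 0 s d) => a b c.
rewrite subn1 /= expn1 -!multE; nia.
Qed.

End P6.
Import P6.

Theorem mainTheorem11 :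
  (forall (k : nat) (s : seq nat), (3 <= k)%N -> odd_prime_chain k s ->
     forall C Cprev : nat,
       is_Cmax (\prod_(p <- s) p) C ->
       is_Cmax (\prod_(p <- take k.-1 s) p) Cprev ->
       (C <= (\prod_(p <- take k.-2 s) p) * Acoef (\prod_(p <- take k.-1 s) p) * Cprev)%N)
  /\
  (forall (R : realFieldType) (k : nat) (e : nat -> R), (3 <= k)%N ->
     (forall j, (2 <= j < k)%N -> eps_admissible j (e j)) ->
     eps_inv_admissible k (\prod_(2 <= j < k) e j)%R).
Proof.
split.
  move=> k s k3 hch C Cprev [_ [m0 <-]] [hP _].
  case/and4P: (hch) => /eqP sz hp _ hsort.
  have E1 : (\prod_(p <- s) p)%N = nn s k by rewrite -{1}(take_size s) prod_take sz.
  have E2 : (\prod_(p <- take k.-1 s) p)%N = nn s k.-1 by rewrite prod_take // sz leq_pred.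
  have E3 : (\prod_(p <- take k.-2 s) p)%N = nn s k.-2.
    by rewrite prod_take // sz (leq_trans (leq_pred _) (leq_pred _)).
  rewrite E1 E2 E3; rewrite E2 in hP.
  have k1 : k = (k.-1).+1 by rewrite prednK // (leq_trans _ k3).
  have -> : nn s k = nn s (k.-1).+1 by rewrite -k1.
  apply: (chain_step hp hsort) => //.
    by rewrite -ltnS -k1 (leq_trans _ k3).
  by rewrite sz {2}k1 ltnSn.
move=> R k e k3 hadm s C hch [hC [m0 <-]].
case/and4P: (hch) => /eqP sz hp _ hsort.
have claim : forall d, (d.+2 <= k)%N -> exists Cj : nat,
    (forall m, absz (inv_cyc_coef (nn s d.+2) m) <= Cj)%N /\
    (Cj%:R <= (\prod_(2 <= i < d.+2) e i) * (Mk d.+2 s)%:R :> R)%R.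
  elim=> [|d IH] hd.
    exists 1%N; split.
      by move=> m; apply: chain_base; rewrite // sz (leq_trans _ k3).
    by rewrite big_geq // mul1r /Mk big_ord0.
  have [Cj [h1 h2]] := IH (ltnW hd).
  exists (nn s d.+1 * Acoef (nn s d.+2) * Cj)%N; split.
    by move=> m; apply: (chain_step hp hsort) => //; rewrite sz.
  have hd' : (2 <= d.+2 < k)%N by [].
  have hA := hadm d.+2 hd' (take d.+2 s) (chain_take hch (ltnW hd)).
  rewrite prod_take ?sz ?(ltnW hd) // Mk_take in hA.
  rewrite big_nat_recr //= Mk_step !natrM.
  set n1 := ((nn s d.+1)%:R)%R; set A := ((Acoef _)%:R)%R; set M := ((Mk d.+2 s)%:R)%R.
  set E := (\prod_(2 <= i < d.+2) e i)%R.
  apply: (@le_trans _ _ (n1 * ((e d.+2 * M) * (E * M)))%R).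
    rewrite -mulrA; apply: ler_wpM2l; first exact: ler0n.
    by apply: ler_pM => //; rewrite ler0n.
  rewrite le_eqVlt; apply/orP; left; apply/eqP.
  rewrite mulrACA [(e d.+2 * E)%R]mulrC mulrCA -[(n1 * M * M)%R]mulrA.
  by rewrite [(M * (_ * M))%R]mulrCA; exact: mulrCA.
have ek : (k.-2).+2 = k by rewrite -subn2 -addn2 subnK // (leq_trans _ k3).
have [Cj [h1 h2]] := claim k.-2 (eq_leq ek).
have E1 : (\prod_(p <- s) p)%N = nn s k by rewrite -{1}(take_size s) prod_take sz.
rewrite E1 -ek; apply: le_trans h2; rewrite ler_nat; exact: h1.
Qed.
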